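(* Let $q$ be a prime power, $h\geq 4$, and let $\alpha\in\mathbb{F}_{q^h}\setminus\mathbb{F}_q$ with $\mathbb{F}_{q^h}=\mathbb{F}_q(\alpha)$. For $s,t\in\mathbb{F}_q$ let $f_{s,t}:\mathbb{F}_{q^h}\to\mathbb{F}_q$ be the $\mathbb{F}_q$-linear functional defined on the basis $1,\alpha,\dots,\alpha^{h-1}$ by $f_{s,t}(1)=1$, $f_{s,t}(\alpha^2)=s$, $f_{s,t}(\alpha^{h-1})=t$, and $f_{s,t}(\alpha^j)=0$ for all other $j\in\{1,\dots,h-2\}\setminus\{2\}$. Then there exist at least $q-1$ pairs $(s,t)\in\mathbb{F}_q^2$ such that $f=f_{s,t}$ and $\beta=1$ satisfy: (1) $f(\alpha/\beta)\neq 1$, and (2) for all $k\in\mathbb{F}_q$, $k\neq f\left(\frac{\alpha^2}{\beta}\right)+\left(f\left(\frac{\beta^2}{\alpha+k}\right)+k\right)f\left(\frac{\alpha}{\beta}\right)+k f\left(\frac{\beta^2}{\alpha+k}\right)f\left(\frac{1}{\beta}\right)$. *)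

(* Defs.v *)
From HB Require Import structures.
From mathcomp Require Import all_boot all_order all_algebra all_field.
Set Implicit Arguments. Unset Strict Implicit. Unset Printing Implicit Defensive.
Import GRing.Theory.
Local Open Scope ring_scope.

Definition pow_basis (F : fieldType) (L : fieldExtType F) (a : L) (h : nat)
  : h.-tuple L := [tuple a ^+ i | i < h].

Definition f_st (F : fieldType) (L : fieldExtType F) (h : nat) (a : L)
  (s t : F) (x : L) : F :=
  \sum_(i < h) coord (pow_basis a h) i x *
     (if val i == 0%N then 1 else if val i == 2%N then s
      else if val i == h.-1 then t else 0).

Definition good_pair (F : finFieldType) (L : fieldExtType F) (f : L -> F)
  (a b : L) : bool :=
  (f (a / b) != 1) &&
  [forall k : F,
     k != f (a ^+ 2 / b) + (f (b ^+ 2 / (a + k%:A)) + k) * f (a / b)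
          + k * f (b ^+ 2 / (a + k%:A)) * f (1 / b)].

(* Main.v *)
Require Import Defs.
From HB Require Import structures.
From mathcomp Require Import all_boot all_order all_algebra all_field.
From mathcomp Require Import ring zify.
Set Implicit Arguments. Unset Strict Implicit. Unset Printing Implicit Defensive.
Import GRing.Theory.
Local Open Scope ring_scope.

Lemma alg_in1 (F : fieldType) (L : fieldExtType F) (k : F) : k%:A \in (1%VS : {vspace L}).
Proof. by rewrite rpredZ // memv_line. Qed.

Lemma adeg (F : fieldType) (L : fieldExtType F) (n : nat) (a : L) :
  \dim {:L} = n.+4 -> <<1%VS; a>>%VS = fullv -> adjoin_degree 1%VS a = n.+4.
Proof. by move=> hd hf; rewrite /adjoin_degree hf hd dimv1 divn1. Qed.

Lemma small (F : fieldType) (L : fieldExtType F) (n : nat) (a : L) (p : {poly L}) :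
  \dim {:L} = n.+4 -> <<1%VS; a>>%VS = fullv ->
  p \is a polyOver 1%VS -> (size p <= n.+4)%N -> p.[a] = 0 -> p = 0.
Proof.
move=> hd hf Pp sp pa; apply/eqP.
rewrite -(@root_small_adjoin_poly _ _ 1%AS a p) //; first exact/rootP.
by rewrite (adeg hd hf).
Qed.

Lemma nthX (F : fieldType) (L : fieldExtType F) (h : nat) (a : L) (i : 'I_h) :
  (pow_basis a h)`_i = a ^+ i.
Proof. by rewrite -tnth_nth tnth_mktuple. Qed.

Lemma freeX (F : fieldType) (L : fieldExtType F) (n : nat) (a : L) :
  \dim {:L} = n.+4 -> <<1%VS; a>>%VS = fullv -> free (pow_basis a n.+4).
Proof.
move=> hd hf; apply/freeP => k Hk i.
pose p : {poly L} := \poly_(j < n.+4) (k (inord j))%:A.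
have p0 : p = 0.
  apply: (small hd hf); first by apply/polyOverP => j; rewrite coef_poly; case: ifP => _; rewrite ?alg_in1 ?mem0v.
    exact: size_poly.
  rewrite horner_poly -[RHS]Hk; apply: eq_bigr => j _.
  by rewrite inord_val mulr_algl nthX.
have := congr1 (fun q : {poly L} => q`_i) p0.
rewrite coef_poly ltn_ord inord_val coef0 => /eqP.
by rewrite scaler_eq0 oner_eq0 orbF => /eqP.
Qed.

Lemma spanX (F : fieldType) (L : fieldExtType F) (n : nat) (a : L) :
  \dim {:L} = n.+4 -> <<1%VS; a>>%VS = fullv -> span (pow_basis a n.+4) = fullv.
Proof.
move=> hd hf; apply/eqP; rewrite eqEdim subvf /=.
by have := freeX hd hf; rewrite /free size_tuple hd => /eqP ->.
Qed.

Lemma fpow (F : fieldType) (L : fieldExtType F) (n : nat) (a : L) (s t : F) (m : 'I_n.+4) :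
  \dim {:L} = n.+4 -> <<1%VS; a>>%VS = fullv ->
  f_st n.+4 a s t (a ^+ m) =
    (if val m == 0%N then 1 else if val m == 2%N then s
      else if val m == n.+4.-1 then t else 0).
Proof.
move=> hd hf; rewrite /f_st (bigD1 m) //= big1 ?addr0.
  by rewrite -nthX coord_free ?freeX // eqxx mul1r.
by move=> i /negPf ni; rewrite -nthX coord_free ?freeX // eq_sym ni mul0r.
Qed.

Lemma flin (F : fieldType) (L : fieldExtType F) (n : nat) (a : L) (s t : F) (x : L) :
  f_st n.+4 a s t x = f_st n.+4 a s 0 x + t * coord (pow_basis a n.+4) ord_max x.
Proof.
rewrite /f_st (bigD1 ord_max) //= [in RHS](bigD1 ord_max) //=.
rewrite eqxx mulr0 add0r [RHS]addrC [t * _]mulrC; congr (_ + _).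
apply: eq_bigr => i /negPf ni.
have -> : (val i == n.+3) = false by rewrite -[n.+3]/(val (@ord_max n.+3)) (inj_eq val_inj) ni.
by case: ifP => //; case: ifP.
Qed.

Lemma cnz (F : fieldType) (L : fieldExtType F) (n : nat) (a : L) (k : F) :
  \dim {:L} = n.+4 -> <<1%VS; a>>%VS = fullv -> a \notin 1%VS ->
  coord (pow_basis a n.+4) ord_max ((a + k%:A)^-1) != 0.
Proof.
move=> hd hf ha; apply/negP => /eqP c0.
have nz : a + k%:A != 0.
  apply: contra ha; rewrite addr_eq0 => /eqP ->; by rewrite rpredN alg_in1.
set x := (a + k%:A)^-1 in c0.
pose p : {poly L} := \poly_(j < n.+4) (coord (pow_basis a n.+4) (inord j) x)%:A.
have pa : p.[a] = x.
  rewrite [RHS](@coord_span _ _ _ (pow_basis a n.+4) x) ?spanX ?memvf // horner_poly.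
  by apply: eq_bigr => j _; rewrite inord_val mulr_algl nthX.
have sp : (size p <= n.+3)%N.
  apply/leq_sizeP => j hj; rewrite coef_poly; case: ltnP => // hj2.
  have -> : j = n.+3 by apply/eqP; rewrite eqn_leq hj -ltnS hj2.
  have -> : inord n.+3 = @ord_max n.+3 by apply/val_inj; rewrite /= inordK.
  by rewrite c0 scale0r.
have Pp : p \is a polyOver 1%VS.
  by apply/polyOverP => j; rewrite coef_poly; case: ifP => _; rewrite ?alg_in1 ?mem0v.
pose q := ('X + (k%:A)%:P) * p - 1.
have q0 : q = 0.
  apply: (small hd hf).
  - by rewrite rpredB ?rpred1 // rpredM // polyOverXaddC alg_in1.
  - apply: leq_trans (size_polyD _ _) _; rewrite size_polyN size_poly1 geq_max /=.
    apply/andP; split; last by [].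
    apply: leq_trans (size_polyMleq _ _) _; rewrite size_XaddC.
    by apply: leq_trans (sp).
  - by rewrite /q !hornerE pa /x mulfV //; exact: subrr.
have := congr1 (fun r : {poly L} => r.[- k%:A]) q0.
by rewrite /q !hornerE addNr mul0r sub0r => /eqP; rewrite oppr_eq0 oner_eq0.
Qed.

Lemma exist_good (F : finFieldType) (L : fieldExtType F) (n : nat) (a : L) (s : F) :
  \dim {:L} = n.+4 -> <<1%VS; a>>%VS = fullv -> a \notin 1%VS -> s != 0 ->
  exists t, good_pair (f_st n.+4 a s t) a 1.
Proof.
move=> hd hf ha s0.
pose y k := (a + k%:A)^-1.
pose c k := coord (pow_basis a n.+4) ord_max (y k).
pose g k := ((k - s) / k - f_st n.+4 a s 0 (y k)) / c k.
pose I := [set g k | k in [set~ (0 : F)]].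
have : (0 < #|~: I|)%N.
  have := cardsC I; have : (#|I| <= #|[set~ (0%R : F)]|)%N by apply: leq_imset_card.
  rewrite cardsC1 => hI hC.
  have hF : (0 < #|F|)%N by apply/card_gt0P; exists 0.
  have hC2 : (#|I| + #|~: I| = #|F|)%N := hC.
  rewrite lt0n; apply/negP => /eqP h0; move: hC2 hI hF; rewrite h0 addn0 => ->.
  by case: #|F| => // m; rewrite ltnn.
case/card_gt0P => t; rewrite in_setC => tI; exists t.
have e1 : forall t', f_st n.+4 a s t' (a / 1) = 0.
  by move=> t'; rewrite divr1 -[X in f_st _ _ _ _ X]expr1 (fpow s t' (@Ordinal n.+4 1 isT) hd hf).
have e2 : f_st n.+4 a s t (a ^+ 2 / 1) = s.
  by rewrite divr1 (fpow s t (@Ordinal n.+4 2 isT) hd hf).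
have e3 : f_st n.+4 a s t (1 / 1) = 1.
  by rewrite divr1 -(expr0 a) (fpow s t (@Ordinal n.+4 0 isT) hd hf).
rewrite /good_pair e1 eq_sym oner_eq0 /=; apply/forallP => k.
rewrite e2 e3 mulr0 addr0 mulr1 expr1n div1r -/(y k).
have [->|k0] := eqVneq k 0; first by rewrite mul0r addr0 eq_sym.
apply/negP => /eqP E; apply: (negP tI); apply/imsetP; exists k; first by rewrite !inE.
have cz : c k != 0 by exact: cnz.
move: E; rewrite flin -/(c k) /g => E.
rewrite {1}E; field.
by rewrite cz k0.
Qed.

Theorem proposition4p4 (F : finFieldType) (L : fieldExtType F) (h : nat) (a : L) :
  (4 <= h)%N -> \dim {:L} = h -> a \notin 1%VS -> <<1%VS; a>>%VS = fullv ->
  (#|F|.-1 <= #|[set st : F * F | good_pair (f_st h a st.1 st.2) a 1]|)%N.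
Proof.
case: h => [|[|[|[|n]]]] // _ hd ha hf.
pose T (s : F) := (s, odflt 0 [pick t | good_pair (f_st n.+4 a s t) a 1]).
have Tinj : injective T by move=> s1 s2 /(congr1 fst).
rewrite -(cardsC1 (0 : F)) -(card_imset [set~ (0 : F)] Tinj); apply: subset_leq_card.
apply/subsetP => _ /imsetP[s hs ->]; rewrite inE /=.
case: pickP => [t //| none].
have s0 : s != 0 by move: hs; rewrite !inE.
have [t ht] := exist_good hd hf ha s0.
by rewrite none in ht.
Qed.
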